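(* Let $n\ge1$ and $d\ge1$ be integers, and let $\mu_n$ be a symmetric measure on $(\mathbb{R}^d)^n$ (i.e. invariant under permutations of the $n$ coordinates $\xi_1,\dots,\xi_n\in\mathbb{R}^d$). Then for any $0<s\le t$ and any measurable non-negative function $h$ on $(0,\infty)^n\times(\mathbb{R}^d)^n$ for which the integrals make sense, $$\sum_{\rho\in\Sigma_n}\int_{T_n(t)}\int_{T_n(s)}\int_{(\mathbb{R}^d)^n}h(t_1,\dots,t_n,\xi_1,\dots,\xi_n)\,h(s_1,\dots,s_n,\xi_{\rho(1)},\dots,\xi_{\rho(n)})\,\mu_n(d\xi_1\cdots d\xi_n)\,ds_1\cdots ds_n\,dt_1\cdots dt_n$$ $$\le\frac{s^n+t^n}{2}\int_{T_n(t)}\int_{(\mathbb{R}^d)^n}|h(t_1,\dots,t_n,\xi_1,\dots,\xi_n)|^2\mu_n(d\xi_1\cdots d\xi_n)\,dt_1\cdots dt_n.$$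
   Context: $\Sigma_n$ is the set of permutations of $\{1,\dots,n\}$, and $T_n(t)=\{(t_1,\dots,t_n):0<t_1<\dots<t_n<t\}$. *)

(* Defs.v *)
From HB Require Import structures.
From mathcomp Require Import all_boot all_order all_algebra all_fingroup.
From mathcomp Require Import all_classical all_reals all_analysis.
From mathcomp Require Import measurable_realfun.
Set Implicit Arguments. Unset Strict Implicit. Unset Printing Implicit Defensive.
Import Order.TTheory GRing.Theory Num.Theory.
Local Open Scope classical_set_scope.
Local Open Scope ring_scope.
Local Open Scope ereal_scope.

(* Points of R^d are d-tuples of reals (Borel product sigma-algebra);
   points of (R^d)^n are n-tuples of such. *)


Definition permute_tuple (T : Type) (n : nat) (rho : 'S_n) (xi : n.-tuple T)
  : n.-tuple T := [tuple tnth xi (rho i) | i < n].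

Definition symmetric_measure (R : realType) (d n : nat)
  (mu : {measure set (n.-tuple (d.-tuple R)) -> \bar R}) : Prop :=
  forall (rho : 'S_n) (A : set (n.-tuple (d.-tuple R))),
    measurable A -> mu (permute_tuple rho @^-1` A) = mu A.

(* Iterated Lebesgue integral over the simplex
   T_n(t) = {0 < t_1 < ... < t_n < t}:
   simplex_int n t f = \int_{0<t_n<t} ... \int_{0<t_1<t_2} f(t_1,...,t_n) dt_1 ... dt_n
   (innermost integration in t_1, outermost in t_n). *)
Fixpoint simplex_int (R : realType) (n : nat) : R -> (n.-tuple R -> \bar R) -> \bar R :=
  match n with
  | 0 => fun _ f => f [tuple]
  | k.+1 => fun t f =>
      \int[lebesgue_measure]_(u in `]0%R, t[)
         @simplex_int R k u (fun s : k.-tuple R => f [tuple of rcons s u])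
  end.

Definition sq_int (R : realType) (n d : nat)
  (mu : {measure set (n.-tuple (d.-tuple R)) -> \bar R})
  (h : n.-tuple R * n.-tuple (d.-tuple R) -> R) (tt : n.-tuple R) : \bar R :=
  \int[mu]_xi ((`|h (tt, xi)| ^+ 2)%:E).

Arguments simplex_int {R} n t f.

(* Main.v *)
Require Import Defs.
From HB Require Import structures.
From mathcomp Require Import all_boot all_order all_algebra all_fingroup.
From mathcomp Require Import all_classical all_reals all_analysis.
From mathcomp Require Import measurable_realfun.
From mathcomp Require Import ring lra.
Import Order.TTheory GRing.Theory Num.Theory.
Local Open Scope classical_set_scope.
Local Open Scope ring_scope.

Section anyint.
Import HBNNSimple.
Local Open Scope ereal_scope.
Context d (T : measurableType d) (R : realType) (mu : {measure set T -> \bar R}).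

Lemma le_int_any (D : set T) (f g : T -> \bar R) :
 (forall x, D x -> 0 <= f x) -> (forall x, D x -> f x <= g x) ->
 \int[mu]_(x in D) f x <= \int[mu]_(x in D) g x.
Proof.
move=> f0 fg.
have g0 : forall x, D x -> 0 <= g x by move=> x Dx; exact: le_trans (f0 _ Dx) (fg _ Dx).
rewrite !ge0_integralE//; apply: ereal_sup_le => _ [h hf <-]; exists h => // x.
apply: le_trans (hf x) _; rewrite /patch; case: ifP => // /[1!inE]; exact: fg.
Qed.

Lemma le_int_sub (D E : set T) (f : T -> \bar R) :
 (forall x, E x -> 0 <= f x) -> D `<=` E ->
 \int[mu]_(x in D) f x <= \int[mu]_(x in E) f x.
Proof.
move=> f0 DE.
rewrite !ge0_integralE//; last by move=> x /DE; exact: f0.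
apply: ereal_sup_le => _ [h hf <-]; exists h => // x.
apply: le_trans (hf x) _; rewrite /patch; case: ifPn => [/[1!inE] /DE Ex|_].
  by rewrite mem_set.
by case: ifP => // /[1!inE]; exact: f0.
Qed.

Lemma sint_int (h : {nnsfun T >-> R}) : sintegral mu h = \int[mu]_x (h x)%:E.
Proof. by rewrite integral_nnsfun// patch_setT. Qed.

Lemma int_scale_any (D : set T) (a : R) (f : T -> \bar R) : (0 <= a)%R ->
 (forall x, D x -> 0 <= f x) ->
 \int[mu]_(x in D) (a%:E * f x) <= a%:E * \int[mu]_(x in D) f x.
Proof.
move=> a0 f0.
rewrite ge0_integralE; last by move=> x Dx; rewrite mule_ge0// f0.
apply: ge_ereal_sup => _ [h /= hf <-].
rewrite sint_int.
have [a00|apos] := eqVneq a 0%R.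
  subst a; rewrite mul0e integral0_eq// => x _; congr EFin; apply/eqP.
  rewrite eq_le fun_ge0 andbT -lee_fin; apply: le_trans (hf x) _.
  by rewrite /patch; case: ifP => _; rewrite ?mul0e.
have a0' : (0 < a)%R by rewrite lt_def apos.
rewrite (eq_integral (fun x => a%:E * (h x / a)%:E)); last first.
  by move=> x _; rewrite -EFinM mulrC divfK.
rewrite ge0_integralZl_EFin//; try (by move=> x _; rewrite lee_fin divr_ge0);
  try (by apply/measurable_EFinP; apply: measurable_funM).
apply: lee_wpmul2l; first by rewrite lee_fin.
rewrite [X in _ <= X]integral_mkcond; apply: le_int_any.
  by move=> x _; rewrite lee_fin divr_ge0.
move=> x _; have := hf x; rewrite /patch; case: ifP => _.
  by move=> hx; rewrite -(@lee_pmul2l _ a%:E) ?lte_fin// -EFinM mulrC divfK.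
move=> hx; have h0 : h x = 0%R by apply/eqP; rewrite eq_le fun_ge0 andbT -lee_fin.
by rewrite h0 mul0r.
Qed.

Lemma int_add_any (D : set T) (mD : measurable D) (psi : T -> R)
  (mpsi : measurable_fun D psi) (psi0 : forall x, D x -> (0 <= psi x)%R)
  (f : T -> \bar R) (f0 : forall x, D x -> 0 <= f x) :
  \int[mu]_(x in D) ((psi x)%:E + f x) <= \int[mu]_(x in D) (psi x)%:E + \int[mu]_(x in D) f x.
Proof.
rewrite ge0_integralE; last by move=> x Dx; rewrite adde_ge0// ?lee_fin ?f0 ?psi0.
apply: ge_ereal_sup => _ [h /= hf <-].
rewrite sint_int.
have hD : forall x, ~ D x -> h x = 0%R.
  move=> x Dx; apply/eqP; rewrite eq_le fun_ge0 andbT -lee_fin; apply: le_trans (hf x) _.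
  by rewrite /patch; case: ifP => // /[1!inE].
have -> : \int[mu]_x (h x)%:E = \int[mu]_(x in D) (h x)%:E.
  rewrite [RHS]integral_mkcond; apply: eq_integral => x _; rewrite /patch.
  by case: ifPn => // xD; rewrite hD // => Dx; move: xD; rewrite (mem_set Dx).
have mh : measurable_fun D h by exact: measurable_funS (measurable_funPT h).
rewrite (eq_integral (fun x => (Order.min (h x) (psi x))%:E + (Order.max (h x - psi x) 0)%:E)); last first.
  move=> x _; rewrite -EFinD; congr (_%:E).
  case: (leP (h x) (psi x)) => hp.
    by rewrite (@max_r _ _ (h x - psi x) 0)%R ?addr0// subr_le0.
  by rewrite max_l ?subr_ge0 ?ltW// addrC subrK.
rewrite ge0_integralD//; first last.
- apply/measurable_EFinP; apply: measurable_maxr => //; exact: measurable_funB.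
- by move=> x _; rewrite lee_fin le_max lexx orbT.
- by apply/measurable_EFinP; apply: measurable_minr.
- by move=> x Dx; rewrite lee_fin le_min psi0 // andbT.
apply: leeD; apply: le_int_any.
- by move=> x Dx; rewrite lee_fin le_min psi0 // andbT.
- by move=> x _; rewrite lee_fin ge_min lexx orbT.
- by move=> x _; rewrite lee_fin le_max lexx orbT.
move=> x Dx; have := hf x; rewrite /patch mem_set//.
move: (f0 x Dx); case: (f x) => [r r0|_ _|//]; last by rewrite leey.
rewrite -EFinD !lee_fin => hx; rewrite lee_fin in r0; rewrite ge_max r0 andbT; lra.
Qed.
End anyint.
Arguments le_int_any {d T R mu D f g}.
Arguments le_int_sub {d T R mu D E f}.
Arguments int_scale_any {d T R mu D a f}.
Arguments int_add_any {d T R mu D} mD {psi} mpsi psi0 {f} f0.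
Section Bsec.
Import numFieldNormedType.Exports.

Lemma int_mono (R : realType) (u : R) (k : nat) : 0 < u ->
  (\int[@lebesgue_measure R]_(x in `]0%R, u[) ((x ^+ k / k`!%:R)%:E) = (u ^+ k.+1 / k.+1`!%:R)%:E)%E.
Proof.
move=> u0.
rewrite -(@integral_itv_bndoo _ _ _ _ true false); last first.
  apply/measurable_EFinP; apply: measurable_funM => //; exact: measurable_fun_pow.


rewrite (@continuous_FTC2 _ (fun x : R => x ^+ k / k`!%:R) (fun x : R => x ^+ k.+1 * (k.+1`!%:R)^-1)) //.
- by rewrite expr0n /= mul0r sube0.
- have hc : continuous (fun x : R => x ^+ k / k`!%:R).
    move=> x; apply: cvgM; last exact: cvg_cst.
    exact: exprn_continuous.
  exact: (continuous_subspaceT hc).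
- split.
  + move=> y _; apply: derivableM => //; exact: exprn_derivable.
  + apply: cvg_at_right_filter; apply: cvgM; last exact: cvg_cst.
    exact: exprn_continuous.
  + apply: cvg_at_left_filter; apply: cvgM; last exact: cvg_cst.
    exact: exprn_continuous.
- move=> x _; rewrite derive1Mr; last exact: exprn_derivable.
  rewrite exp_derive1 /= factS natrM invfM.
  rewrite -[k.+1%:R *: _]/(k.+1%:R * x ^+ k); field.
  by rewrite pnatr_eq0 -lt0n fact_gt0 /= -(natrD _ 1 k) pnatr_eq0.
Qed.

End Bsec.

Section simplex.
Context (R : realType).
Local Open Scope ereal_scope.

Lemma int_cmono (c u : R) (k : nat) : (0 <= c)%R -> (0 <= u)%R ->
  \int[@lebesgue_measure R]_(x in `]0%R, u[) ((c * (x ^+ k / k`!%:R))%:E) = (c * (u ^+ k.+1 / k.+1`!%:R))%:E.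
Proof.
move=> c0 u0.
have [u00|upos] := eqVneq u 0%R.
  subst u; rewrite set_itv_ge ?integral_set0 ?bnd_simp //.
  by rewrite expr0n /= mul0r mulr0.
under eq_integral => x _ do rewrite EFinM.
rewrite ge0_integralZl_EFin //.
- by rewrite int_mono // lt_def upos u0.
- move=> x; rewrite /= in_itv /= => /andP[x0 _]; rewrite lee_fin divr_ge0 //.
  by rewrite exprn_ge0 // ltW.
- apply/measurable_EFinP; apply: measurable_funM => //; exact: measurable_fun_pow.
Qed.

Lemma simplex_ge0 k : forall t (f : k.-tuple R -> \bar R), (forall x, 0 <= f x) ->
  0 <= simplex_int k t f.
Proof.
elim: k => [|k IH] t f f0 /=; first exact: f0.
by apply: integral_ge0 => u _; apply: IH => s; exact: f0.
Qed.

Lemma simplex_le k : forall t (f g : k.-tuple R -> \bar R), (forall x, 0 <= f x) ->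
  (forall x, f x <= g x) -> simplex_int k t f <= simplex_int k t g.
Proof.
elim: k => [|k IH] t f g f0 fg /=; first exact: fg.
apply: le_int_any => u _; first exact: simplex_ge0.
by apply: IH => // s.
Qed.

Lemma simplex_scale k : forall t (a : R) (f : k.-tuple R -> \bar R), (0 <= a)%R ->
  (forall x, 0 <= f x) ->
  simplex_int k t (fun x => a%:E * f x) <= a%:E * simplex_int k t f.
Proof.
elim: k => [|k IH] t a f a0 f0 /=; first exact: lexx.
apply: le_trans (int_scale_any a0 _); last first.
  by move=> u _; apply: simplex_ge0.
apply: le_int_any => u _; last exact: IH.
by apply: simplex_ge0 => x; rewrite mule_ge0 // lee_fin.
Qed.

Lemma simplex_dom k (s t : R) (f : k.-tuple R -> \bar R) : (s <= t)%R ->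
  (forall x, 0 <= f x) -> simplex_int k s f <= simplex_int k t f.
Proof.
case: k f => [|k] f st f0 /=; first exact: lexx.
apply: le_int_sub; first by move=> u _; apply: simplex_ge0.
move=> x /=; rewrite !in_itv /= => /andP[-> xs] /=; exact: lt_le_trans xs st.
Qed.

Lemma simplex_one k : forall (u : R), (0 <= u)%R ->
  simplex_int k u (fun _ => 1) = (u ^+ k / k`!%:R)%:E.
Proof.
elim: k => [|k IH] u u0 /=; first by rewrite expr0 fact0 divr1.
have := @int_cmono 1 u k ler01 u0; rewrite mul1r => <-.
apply: eq_integral => x; rewrite inE /= in_itv /= => /andP[x0 _]; rewrite mul1r; apply: IH.
exact: ltW.
Qed.

Lemma simplex_addc k : forall (u c : R) (f : k.-tuple R -> \bar R), (0 <= c)%R -> (0 <= u)%R ->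
  (forall x, 0 <= f x) ->
  simplex_int k u (fun x => c%:E + f x) <= (c * (u ^+ k / k`!%:R))%:E + simplex_int k u f.
Proof.
elim: k => [|k IH] u c f c0 u0 f0 /=.
  by rewrite expr0 fact0 divr1 mulr1.
have H : \int[lebesgue_measure]_(v in `]0%R, u[)
     simplex_int k v (fun s : k.-tuple R => c%:E + f [tuple of rcons s v]) <=
  \int[lebesgue_measure]_(v in `]0%R, u[) ((c * (v ^+ k / k`!%:R))%:E +
   simplex_int k v (fun s => f [tuple of rcons s v])).
  apply: le_int_any.
  - by move=> v _; apply: simplex_ge0 => x; rewrite adde_ge0 // lee_fin.
  - move=> v; rewrite /= in_itv /= => /andP[v0 _]; apply: IH => //; exact: ltW.
apply: le_trans H _.
apply: le_trans (int_add_any _ _ _ _) _.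
- exact: measurable_itv.
- by apply: measurable_funM => //; apply: measurable_funM => //; exact: measurable_fun_pow.
- move=> v; rewrite /= in_itv /= => /andP[v0 _]; rewrite mulr_ge0 // divr_ge0 //.
  by rewrite exprn_ge0 // ltW.
- by move=> v _; apply: simplex_ge0.
by rewrite int_cmono.
Qed.

End simplex.

Lemma permute_measurable (R : realType) (n d : nat) (rho : 'S_n) :
  measurable_fun [set: n.-tuple (d.-tuple R)] (@permute_tuple (d.-tuple R) n rho).
Proof.
apply/measurable_fun_tnthP => i.
rewrite (_ : _ \o _ = (@tnth _ _ ^~ (rho i))); first exact: measurable_tnth.
by apply: funext => xi /=; rewrite /permute_tuple tnth_mktuple.
Qed.

Lemma cross_bound (R : realType) (n d : nat)
  (mu : {measure set (n.-tuple (d.-tuple R)) -> \bar R})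
  (mu_sym : symmetric_measure mu)
  (h : n.-tuple R * n.-tuple (d.-tuple R) -> R)
  (h_meas : measurable_fun setT h)
  (h_ge0 : forall z, 0 <= h z) (rho : 'S_n) tt ss :
  (\int[mu]_xi ((h (tt, xi) * h (ss, permute_tuple rho xi))%:E) <=
   (2^-1)%:E * sq_int mu h tt + (2^-1)%:E * sq_int mu h ss)%E.
Proof.
have mh y : measurable_fun setT (fun xi => h (y, xi)).
  exact: measurableT_comp h_meas (pair1_measurable y).
have mP := @permute_measurable R n d rho.
have cv : (\int[mu]_xi ((h (ss, permute_tuple rho xi) ^+ 2)%:E) =
           \int[mu]_xi ((h (ss, xi) ^+ 2)%:E))%E.
  have := ge0_integral_pushforward mP mu (D := setT)
     (f := fun xi => ((h (ss, xi) ^+ 2)%:E)) measurableT.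
  rewrite preimage_setT => <- //; last first.
  - by move=> y _; rewrite lee_fin sqr_ge0.
  - by apply/measurable_EFinP; apply: measurable_funX; exact: mh.
  apply: eq_measure_integral => A mA _.
  exact: (mu_sym rho A mA).
rewrite /sq_int.
under [X in (_ <= _ * X + _)%E]eq_integral => xi _ do rewrite ger0_norm //.
under [X in (_ <= _ + _ * X)%E]eq_integral => xi _ do rewrite ger0_norm //.
rewrite -cv.
rewrite -!ge0_integralZl_EFin //; first last.
- by apply/measurable_EFinP; apply: measurable_funX; exact: mh.
- by move=> y _; rewrite lee_fin sqr_ge0.
- apply/measurable_EFinP; apply: measurable_funX.
  exact: measurableT_comp (mh ss) mP.
- by move=> y _; rewrite lee_fin sqr_ge0.
rewrite -ge0_integralD //; first last.
- apply: measurable_funeM; apply/measurable_EFinP; apply: measurable_funX.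
  exact: measurableT_comp (mh ss) mP.
- by move=> y _; rewrite mule_ge0 // lee_fin ?sqr_ge0.
- by apply: measurable_funeM; apply/measurable_EFinP; apply: measurable_funX; exact: mh.
- by move=> y _; rewrite mule_ge0 // lee_fin ?sqr_ge0.
apply: le_int_any => xi _; first by rewrite lee_fin mulr_ge0.
rewrite -!EFinM -EFinD lee_fin.
have := h_ge0 (tt, xi); have := h_ge0 (ss, permute_tuple rho xi).
set a := h (tt, xi); set b := h (ss, _) => _ _.
have : 0 <= (a - b) ^+ 2 by exact: sqr_ge0.
lra.
Qed.

Theorem lemmaA1 (R : realType) (n d : nat) (n_ge1 : (0 < n)%N) (d_ge1 : (0 < d)%N)
  (mu : {measure set (n.-tuple (d.-tuple R)) -> \bar R})
  (mu_sym : symmetric_measure mu)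
  (s t : R) (s_gt0 : 0 < s) (s_le_t : s <= t)
  (h : n.-tuple R * n.-tuple (d.-tuple R) -> R)
  (h_meas : measurable_fun setT h)
  (h_ge0 : forall z, 0 <= h z)
  (h2_meas : measurable_fun setT (sq_int mu h)) :
  (\sum_(rho : 'S_n)
     simplex_int n t (fun tt =>
       simplex_int n s (fun ss =>
         \int[mu]_xi ((h (tt, xi) * h (ss, permute_tuple rho xi))%:E)))
   <= ((s ^+ n + t ^+ n) / 2)%:E * simplex_int n t (sq_int mu h))%E.
Proof.
have s0 : 0 <= s := ltW s_gt0.
have t0 : 0 <= t := le_trans s0 s_le_t.
have F0 : forall tt, (0 <= sq_int mu h tt)%E.
  by move=> tt; apply: integral_ge0 => xi _; rewrite lee_fin exprn_ge0.
have I0 : forall rho tt ss,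
    (0 <= \int[mu]_xi ((h (tt, xi) * h (ss, permute_tuple rho xi))%:E))%E.
  by move=> rho tt ss; apply: integral_ge0 => xi _; rewrite lee_fin mulr_ge0.
have X0 : (0 <= simplex_int n t (sq_int mu h))%E by exact: simplex_ge0.
have Spos : 0 < (s ^+ n + t ^+ n) / 2.
  by rewrite divr_gt0 // ltr_pwDl ?exprn_ge0 ?exprn_gt0.
have nf0 : 0 < n`!%:R :> R by rewrite ltr0n fact_gt0.
set vs := s ^+ n / n`!%:R.
set vt := t ^+ n / n`!%:R.
have vs0 : 0 < vs by rewrite divr_gt0 // exprn_gt0.
have vt0 : 0 <= vt by rewrite divr_ge0 ?exprn_ge0 // ltW.
move: X0; case Xe: (simplex_int n t (sq_int mu h)) => [x| |] X0 //; last first.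
  by rewrite gt0_muley ?lte_fin // leey.
rewrite lee_fin in X0.
set C := simplex_int n s (fun ss => (2^-1)%:E * sq_int mu h ss)%E.
have C0 : (0 <= C)%E by apply: simplex_ge0 => ss; rewrite mule_ge0 // lee_fin.
have CX : (C <= (2^-1 * x)%:E)%E.
  apply: le_trans (@simplex_scale R n s (2^-1) (sq_int mu h) _ _) _ => //.
  rewrite EFinM -Xe; apply: lee_wpmul2l; first by rewrite lee_fin.
  exact: simplex_dom.
move: C0 CX; case Ce: C => [c| |] C0 CX //.
rewrite lee_fin in C0 CX.
have inner : forall rho tt,
   (simplex_int n s (fun ss =>
       \int[mu]_xi ((h (tt, xi) * h (ss, permute_tuple rho xi))%:E)) <=
    c%:E + (2^-1 * vs)%:E * sq_int mu h tt)%E.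
  move=> rho tt.
  have H1 : (simplex_int n s (fun ss =>
       \int[mu]_xi ((h (tt, xi) * h (ss, permute_tuple rho xi))%:E)) <=
       simplex_int n s (fun ss => (2^-1)%:E * sq_int mu h tt + (2^-1)%:E * sq_int mu h ss))%E.
    apply: simplex_le => // ss; exact: cross_bound.
  apply: le_trans H1 _.
  move: (F0 tt); case Ft: (sq_int mu h tt) => [r| |] r0 //; last first.
    rewrite [X in (_ <= _ + X)%E]gt0_muley; last by rewrite lte_fin mulr_gt0 ?invr_gt0.
    have -> : (c%:E + +oo = +oo :> \bar R)%E by [].
    exact: leey.
  have {}r0 : (0 <= r)%R by rewrite -lee_fin.
  have c0' : (0 <= 2^-1 * r)%R by rewrite mulr_ge0 // invr_ge0.
  have f0' : forall ss, (0 <= (2^-1)%:E * sq_int mu h ss)%E.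
    by move=> ss; apply: mule_ge0; [rewrite lee_fin invr_ge0 | exact: F0].
  have H2 := @simplex_addc R n s (2^-1 * r) _ c0' s0 f0'.
  rewrite -/vs -/C Ce in H2.
  apply: le_trans H2 _.
  by rewrite addeC -EFinM mulrAC.
have outer : forall rho,
   (simplex_int n t (fun tt => simplex_int n s (fun ss =>
       \int[mu]_xi ((h (tt, xi) * h (ss, permute_tuple rho xi))%:E))) <=
    (c * vt + 2^-1 * vs * x)%:E)%E.
  move=> rho.
  have H1 : (simplex_int n t (fun tt => simplex_int n s (fun ss =>
       \int[mu]_xi ((h (tt, xi) * h (ss, permute_tuple rho xi))%:E))) <=
     simplex_int n t (fun tt => c%:E + (2^-1 * vs)%:E * sq_int mu h tt))%E.
    apply: simplex_le => // tt; first by apply: simplex_ge0 => ss; exact: I0.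
  have f0'' : forall tt, (0 <= (2^-1 * vs)%:E * sq_int mu h tt)%E.
    by move=> tt; apply: mule_ge0; [rewrite lee_fin mulr_ge0 ?invr_ge0 ?ltW | exact: F0].
  have H2 := @simplex_addc R n t c _ C0 t0 f0''.
  have H3 := @simplex_scale R n t (2^-1 * vs) (sq_int mu h).
  rewrite Xe in H3.
  have hv : (0 <= 2^-1 * vs)%R by rewrite mulr_ge0 ?invr_ge0 ?ltW.
  have {}H3 := H3 hv F0.
  apply: le_trans H1 (le_trans H2 _).
  by rewrite -/vt EFinD leeD2l // EFinM.
have HS : (\sum_(rho : 'S_n)
     simplex_int n t (fun tt =>
       simplex_int n s (fun ss =>
         \int[mu]_xi ((h (tt, xi) * h (ss, permute_tuple rho xi))%:E)))
   <= \sum_(rho : 'S_n) (c * vt + 2^-1 * vs * x)%:E)%E.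
  by apply: lee_sum => rho _; exact: outer.
apply: le_trans HS _.
rewrite sumEFin sumr_const card_Sn -EFinM lee_fin -[X in (X <= _)%R]mulr_natr.
have -> : (c * vt + 2^-1 * vs * x) * n`!%:R = c * t ^+ n + 2^-1 * s ^+ n * x.
  by rewrite /vt /vs; field; rewrite gt_eqF.
have T0 : 0 <= t ^+ n by rewrite exprn_ge0.
have CX2 : c <= 2^-1 * x by rewrite -lee_fin.
have : 0 <= (2^-1 * x - c) * t ^+ n by rewrite mulr_ge0 // subr_ge0.
nra.
Qed.
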